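(* Let $0<p<1$ and let $k\ge 1$ be an integer. A coin showing heads (H) with probability $p$ and tails (T) with probability $1-p$ is flipped independently until $k$ consecutive heads $\mathrm{H}^k$ first appear; let $Y$ be the number of flips. Then $E(Y^0)=1$ and for every $n\ge 1$, \[ E(Y^n) = k^n + \sum_{j=0}^{n-1} \binom{n}{j} E(Y^j) \sum_{i=1}^k \frac{(1-p)\,i^{n-j}}{p^{k-i+1}} = k^n + \sum_{j=0}^{n-1} \binom{n}{j} E(Y^j) \sum_{i=0}^n \frac{e_{n-j,i}\, p^i - e_{n-j,i}^k\, p^{k+i+1}}{(1-p)^{n-j}p^{k+1}}. \]
   Context: The Eulerian numbers $e_{n,i}$ are defined by $e_{0,0}=1$, $e_{n,i}=0$ whenever $i\le 0$ (unless $n=i=0$) or $i>n$, and $e_{n,i}=i\,e_{n-1,i}+(n-i+1)\,e_{n-1,i-1}$ otherwise. For the integer parameter $k$, $e^k_{0,0}=1$, $e^k_{n,i}=0$ whenever $i<0$ or $i>n$, and $e^k_{n,i}=(k+i+1)\,e^k_{n-1,i}+(n-k-i)\,e^k_{n-1,i-1}$ otherwise. *)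

(* Defs.v *)
From HB Require Import structures.
From mathcomp Require Import all_boot all_order all_algebra.
From mathcomp Require Import all_classical all_reals all_analysis.
Set Implicit Arguments. Unset Strict Implicit. Unset Printing Implicit Defensive.
Import Order.TTheory GRing.Theory Num.Theory.
Import numFieldNormedType.Exports.
Local Open Scope ring_scope.

Fixpoint eul (n i : nat) : nat :=
  match n with
  | 0 => (i == 0)%N
  | n'.+1 => if (i == 0)%N || (n'.+1 < i)%N then 0%N
             else (i * eul n' i + (n'.+1 - i + 1) * eul n' i.-1)%N
  end.

Fixpoint eulk (k : int) (n i : nat) : int :=
  match n with
  | 0 => ((i == 0)%N)%:Z
  | n'.+1 => if (n'.+1 < i)%N then 0
             else (k + i%:Z + 1) * eulk k n' i
                  + (n'.+1%:Z - k - i%:Z) * (if i is i'.+1 then eulk k n' i' else 0)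
  end.

(* The boolean sequence s (true = heads) contains k consecutive heads. *)
Definition has_run (k : nat) (s : seq bool) : bool :=
  [exists i : 'I_(size s).+1, (i + k <= size s)%N && all id (take k (drop i s))].

Definition first_run_at_end (k : nat) (s : seq bool) : bool :=
  has_run k s && ~~ has_run k (take (size s).-1 s).

Definition word_prob {R : realType} (p : R) (s : seq bool) : R :=
  \prod_(b <- s) (if b then p else 1 - p).

Definition PY {R : realType} (p : R) (k m : nat) : R :=
  \sum_(w : m.-tuple bool | first_run_at_end k w) word_prob p w.

Definition EY {R : realType} (p : R) (k n : nat) : R :=
  limn (series (fun m : nat => (m%:R : R) ^+ n * PY p k m)).

(* Main.v *)
Require Import Defs.
From HB Require Import structures.
From mathcomp Require Import all_boot all_order all_algebra.
From mathcomp Require Import all_classical all_reals all_analysis.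
From mathcomp Require Import ring lra zify.
Import Order.TTheory GRing.Theory Num.Theory.
Import numFieldNormedType.Exports.
Local Open Scope classical_set_scope.
Local Open Scope ring_scope.


Lemma eul_gt {m t} : (m < t)%N -> eul m t = 0%N.
Proof.
case: m => [|m] /=; first by case: t.
by move=> ->; rewrite orbT.
Qed.

Lemma eulk_gt {k m t} : (m < t)%N -> eulk k m t = 0.
Proof.
case: m => [|m] /=; first by case: t.
by move=> ->.
Qed.

Section Poly.
Variables (R : comNzRingType) (k : nat).

Definition Aeul m : {poly R} := \poly_(i < m.+1) (eul m i)%:R.
Definition Beul m : {poly R} := \poly_(i < m.+1) (eulk k%:Z m i)%:~R.
Definition Fpow m : {poly R} := \poly_(i < k.+1) ((i%:R : R) ^+ m).
Definition opm m (q : {poly R}) := 'X * ((1 - 'X) * q^`() + q *+ m.+1).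

Lemma coefA m t : (Aeul m)`_t = (eul m t)%:R.
Proof. by rewrite coef_poly; case: ltnP => // h; rewrite eul_gt. Qed.

Lemma coefB' m t : (Beul m)`_t = (eulk k%:Z m t)%:~R.
Proof. by rewrite coef_poly; case: ltnP => // h; rewrite eulk_gt. Qed.

Lemma opmB m p q : opm m (p - q) = opm m p - opm m q.
Proof. rewrite /opm derivB. ring. Qed.

Lemma Fpow_rec m : Fpow m.+1 = 'X * (Fpow m)^`().
Proof.
apply/polyP => t; rewrite coefXM coef_deriv !coef_poly.
case: t => [|t] /=; first by rewrite expr0n.
by case: ifP => _; rewrite ?mul0rn // exprSr ?mul1r mulr_natr.
Qed.

Lemma G_rec m : (1 - 'X)^+(m.+2) * Fpow m.+1 = opm m ((1 - 'X)^+(m.+1) * Fpow m).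
Proof.
rewrite Fpow_rec /opm derivM deriv_exp derivB derivX derivC /=.
rewrite !exprS. ring.
Qed.

Lemma A_rec m : Aeul m.+1 = opm m (Aeul m).
Proof.
apply/polyP => t; rewrite coefA /opm coefXM.
case: t => [|s] //=.
rewrite mulrBl mul1r coefD coefB coefXM !coef_deriv coefMn !coefA.
have -> : (if s == 0%N then 0 else (eul m s.-1.+1)%:R *+ s.-1.+1) = (eul m s)%:R *+ s :> R.
  case: s => [|s]; first by rewrite mulr0n.
  by [].
case: ltnP => hs.
  move: hs; rewrite ltnS => hs2.
  have hs3 : (m < s.+1)%N by rewrite ltnS; apply: ltnW.
  rewrite (eul_gt hs3) (eul_gt hs2).
  rewrite !mul0rn subrr addr0.
  exact: mulr0n.
rewrite natrD !natrM natrD (natrB _ hs).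
move: (eul m s.+1)%:R (eul m s)%:R => a b.
ring.
Qed.

Lemma Bq m : Beul m.+1 = (1 - 'X) * (Beul m *+ k.+1 + 'X * (Beul m)^`()) + 'X * Beul m *+ m.+1.
Proof.
apply/polyP => t; rewrite coefB' mulrBl mul1r.
case: t => [|s]; rewrite !(coefD, coefN, coefMn, coefXM, coef_deriv, coefB') /=.
  rewrite mulr0 addr0 intrM !intrD -!pmulrn.
  move: (eulk k m 0)%:~R => b.
  ring.
have -> : (if s == 0%N then 0 else (eulk k m s.-1.+1)%:~R *+ s.-1.+1) = (eulk k m s)%:~R *+ s :> R.
  case: s => [|s]; first by rewrite mulr0n.
  by [].
case: ltnP => hs.
  move: hs; rewrite ltnS => hs2.
  have hs3 : (m < s.+1)%N by rewrite ltnS; apply: ltnW.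
  rewrite (eulk_gt hs3) (eulk_gt hs2).
  rewrite !mul0rn subrr addr0.
  exact: mulr0z.
rewrite intrD !intrM !intrB !intrD -!pmulrn.
move: (eulk k m s.+1)%:~R (eulk k m s)%:~R => a b.
ring.
Qed.

Definition Hp m : {poly R} := Aeul m - 'X^(k.+1) * Beul m.

Lemma H_rec m : Hp m.+1 = opm m (Hp m).
Proof.
rewrite /Hp opmB -A_rec; congr (_ - _).
rewrite Bq /opm derivM derivXn /= !exprS. ring.
Qed.

Lemma GH0 : (1 - 'X)^+1 * Fpow 0 = Hp 0.
Proof.
apply/polyP => t; rewrite /Hp expr1 mulrBl mul1r.
case: t => [|s]; rewrite !(coefD, coefN, coefXM, coefXnM, coefA, coefB', coef_poly) /=.
  by rewrite expr0.
rewrite !expr0 !ltnS.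
case: (ltngtP s k) => h.
- by rewrite subrr subr0.
- by rewrite subSS subn_eq0 leqNgt h.
- by rewrite h subnn.
Qed.

Lemma GH m : (1 - 'X)^+(m.+1) * Fpow m = Hp m.
Proof.
elim: m => [|m IH]; first exact: GH0.
by rewrite G_rec IH H_rec.
Qed.

End Poly.

Lemma eul_id (R : realType) (p : R) (k n j : nat) : 0 < p -> p < 1 -> (j < n)%N ->
  \sum_(1 <= i < k.+1) ((1 - p) * (i%:R : R) ^+ (n - j) / p ^+ (k - i + 1)) =
  \sum_(0 <= i < n.+1)
    (((eul (n - j) i)%:R * p ^+ i - (eulk k%:Z (n - j) i)%:~R * p ^+ (k + i + 1))
       / ((1 - p) ^+ (n - j) * p ^+ (k + 1))).
Proof.
move=> p0 p1 jn.
have m1 : (0 < n - j)%N by rewrite subn_gt0.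
have mn : (n - j <= n)%N by rewrite leq_subr.
move: m1 mn; set m := (n - j)%N => m1 mn.
have hp : p != 0 by rewrite gt_eqF.
have hq : 1 - p != 0 by rewrite subr_eq0 gt_eqF.
have GHp := congr1 (fun q => q.[p]) (GH R k m).
have eF : (Fpow R k m).[p] = \sum_(i < k.+1) (i%:R)^+m * p^+i by rewrite horner_poly.
have eA : (Aeul R m).[p] = \sum_(0 <= i < n.+1) (eul m i)%:R * p^+i.
  rewrite big_mkord (@horner_coef_wide _ n.+1); last by rewrite (leq_trans (size_poly _ _)) // ltnS.
  by apply: eq_bigr => i _; rewrite coefA.
have eB : (Beul R k m).[p] = \sum_(0 <= i < n.+1) (eulk k m i)%:~R * p^+i.
  rewrite big_mkord (@horner_coef_wide _ n.+1); last by rewrite (leq_trans (size_poly _ _)) // ltnS.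
  by apply: eq_bigr => i _; rewrite coefB'.
move: GHp; rewrite /Hp /= !hornerE eF eA eB => GHp.
rewrite -mulr_suml sumrB.
have -> : \sum_(0 <= i < n.+1) (eulk k m i)%:~R * p ^+ (k + i + 1) =
   p ^+ (k + 1) * \sum_(0 <= i < n.+1) (eulk k m i)%:~R * p^+i.
  rewrite mulr_sumr; apply: eq_bigr => i _.
  by rewrite addnAC exprD mulrCA.
rewrite addn1 -GHp.
have -> : \sum_(1 <= i < k.+1) ((1 - p) * (i%:R : R) ^+ m / p ^+ (k - i + 1)) =
   (1 - p) / p ^+ (k + 1) * \sum_(1 <= i < k.+1) (i%:R : R) ^+ m * p ^+ i.
  rewrite mulr_sumr big_nat; symmetry; rewrite big_nat; apply: eq_bigr => i /andP [i1 ik].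
  have -> : p ^+ (k + 1) = p ^+ (k - i + 1) * p ^+ i.
    by rewrite -exprD; congr (_ ^+ _); lia.
  field.
  by rewrite !expf_neq0.
rewrite big_ord_recl /= expr0n /= (gtn_eqF m1) mul0r add0r.
rewrite big_add1 big_mkord /= addn1.
set S := \sum_(i < k) _.
clearbody S.
rewrite [(1 - p) ^+ m.+1]exprS.
have h1 : (1 - p) ^+ m != 0 by rewrite expf_neq0.
have h2 : p ^+ k.+1 != 0 by rewrite expf_neq0.
move: ((1 - p) ^+ m) h1 ((p) ^+ k.+1) h2 => a ha b hb.
field.
by rewrite ha hb.
Qed.


Fixpoint hrun (k : nat) (s : seq bool) : bool :=
  match s with
  | [::] => (k == 0)%N
  | b :: s' => ((k <= (size s').+1)%N && all id (take k (b :: s'))) || hrun k s'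
  end.

Lemma has_runE k s : has_run k s = hrun k s.
Proof.
elim: s => [|b s IH].
  apply/existsP/idP => [[i /andP [h1 _]]|/= h].
    by move: h1; rewrite /= leqn0 addn_eq0 => /andP [_ ->].
  by exists ord0; rewrite /= add0n leqn0 h.
rewrite /= -IH.
apply/existsP/orP => [[i /andP [h1 h2]]|[/andP [h1 h2]|/existsP [i /andP [h1 h2]]]].
- case: i h1 h2 => [[|i] hi] /= h1 h2.
    by left; rewrite -(add0n k) h1 -[b :: s]drop0.
  right; apply/existsP.
  have hi' : (i < (size s).+1)%N by [].
  by exists (Ordinal hi') => /=; rewrite -ltnS -addSn h1 h2.
- by exists ord0 => /=; rewrite add0n h1 h2.
- have hi' : (i.+1 < (size s).+2)%N by rewrite ltnS.
  by exists (Ordinal hi') => /=; rewrite addSn ltnS h1 h2.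
Qed.

Fixpoint hrc (k c : nat) (w : seq bool) : bool :=
  match w with
  | [::] => (k <= c)%N
  | b :: w' => (k <= c)%N || hrc k (if b then c.+1 else 0%N) w'
  end.

Lemma nseqS' c : true :: nseq c true = nseq c.+1 true.
Proof. by []. Qed.

Lemma all_id_nseq n : all id (nseq n true).
Proof. by elim: n. Qed.

Lemma all_id_take_nseq k n : all id (take k (nseq n true)).
Proof. by elim: n k => [|n IH] [|k] //=. Qed.

Lemma hrun_nseq k c : hrun k (nseq c true) = (k <= c)%N.
Proof.
elim: c => [|c IH] /=; first by rewrite leqn0.
rewrite IH size_nseq nseqS' all_id_take_nseq andbT.
case: (leqP k c) => h.
  by rewrite orbT leqW.
by rewrite orbF.
Qed.

Lemma hrun_ge k c w : (k <= c)%N -> hrun k (nseq c true ++ w).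
Proof.
elim: c => [|c IH] h.
  by move: h; rewrite leqn0 => /eqP ->; case: w => [|b w] //=; rewrite take0.
rewrite /=.
case: (leqP k c) => hk; first by rewrite IH ?orbT.
have -> : k = c.+1 by apply/eqP; rewrite eqn_leq h hk.
by rewrite size_cat size_nseq ltnS leq_addr /= take_size_cat ?size_nseq // all_id_nseq.
Qed.

Lemma all_take_nseq k c w : all id (take k (nseq c true ++ false :: w)) = (k <= c)%N.
Proof.
elim: c k => [|c IH] [|k] //=.
Qed.

Lemma hrun_false k c w : (0 < k)%N ->
  hrun k (nseq c true ++ false :: w) = (k <= c)%N || hrun k w.
Proof.
move=> k0; elim: c => [|c IH] /=.
  by case: k k0 => [|k] //= _; rewrite andbF.
rewrite -cat_cons nseqS' all_take_nseq IH.
case: (leqP k c.+1) => h /=.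
  have -> : (k <= (size (nseq c true ++ false :: w)).+1)%N.
    by rewrite size_cat size_nseq /=; lia.
  by [].
have -> : (k <= c)%N = false by lia.
by rewrite andbF.
Qed.

Lemma nseq_cons_cat c w : nseq c true ++ true :: w = nseq c.+1 true ++ w.
Proof. by elim: c => [|c IHc] //=; rewrite IHc. Qed.

Lemma hrun_hrc k c w : (0 < k)%N -> hrun k (nseq c true ++ w) = hrc k c w.
Proof.
move=> k0; elim: w c => [|b w IH] c.
  by rewrite cats0 hrun_nseq.
rewrite /= -IH; case: b.
  rewrite nseq_cons_cat.
  case: (leqP k c) => h //=.
  by rewrite hrun_ge // orbT.
by rewrite hrun_false.
Qed.

Lemma fra_hrc k w : (0 < k)%N ->
  first_run_at_end k w = hrc k 0 w && ~~ hrc k 0 (take (size w).-1 w).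
Proof.
move=> k0; rewrite /first_run_at_end !has_runE.
by rewrite -(hrun_hrc k 0 w k0) -(hrun_hrc k 0 (take _ w) k0).
Qed.

Fixpoint frae (k c : nat) (w : seq bool) : bool :=
  match w with
  | [::] => false
  | b :: w' => if b then (if (k <= c.+1)%N then w' == [::] else frae k c.+1 w')
               else frae k 0 w'
  end.

Lemma hrc_ge k c w : (k <= c)%N -> hrc k c w.
Proof. by case: w => [|b w] /= ->. Qed.

Lemma T_frae k c w : (c < k)%N ->
  hrc k c w && ~~ hrc k c (take (size w).-1 w) = frae k c w.
Proof.
elim: w c => [|b w IH] c ck.
  by rewrite /= leqNgt ck.
have E3 : forall u, hrc k c (b :: u) = hrc k (if b then c.+1 else 0%N) u.
  by move=> u; rewrite /= leqNgt ck.
case: w IH => [|x w] IH.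
  rewrite /= (leqNgt k c) ck /= andbT.
  case: b {E3}; first by case: (k <= c.+1)%N.
  by clear IH; move: ck; case: k.
have E2 : take (size (b :: x :: w)).-1 (b :: x :: w) = b :: take (size (x::w)).-1 (x :: w) by [].
rewrite E2 !E3.
have E4 : frae k c (b :: x :: w) = if b then (if (k <= c.+1)%N then false else frae k c.+1 (x::w))
   else frae k 0 (x :: w) by [].
rewrite E4; case: b {E2 E3 E4}.
  case: (leqP k c.+1) => h.
    by rewrite (@hrc_ge k c.+1 (take _ _) h) andbF.
  exact: (IH c.+1 h).
exact: (IH 0%N (leq_ltn_trans (leq0n c) ck)).
Qed.

Section Prob.
Variables (R : realType) (p : R) (k : nat).
Hypothesis hk : (0 < k)%N.

Lemma sum_tuple_cons (F : seq bool -> R) m :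
  \sum_(t : m.+1.-tuple bool) F t = \sum_(t : m.-tuple bool) (F (true :: t) + F (false :: t)).
Proof.
rewrite (reindex (fun bt : bool * m.-tuple bool => [tuple of bt.1 :: bt.2])) /=.
  by rewrite -(pair_big xpredT xpredT (fun b (t : m.-tuple bool) => F (b :: t))) big_bool big_split.
exists (fun t : m.+1.-tuple bool => (thead t, [tuple of behead t])).
  by move=> [b t] _ /=; congr (_, _); apply: val_inj.
by move=> t _; rewrite [RHS]tuple_eta.
Qed.

Lemma sum_tuple0 (F : seq bool -> R) : \sum_(t : 0.-tuple bool) F t = F [::].
Proof.
rewrite (eq_bigr (fun _ => F [::])); last by move=> t _; rewrite tuple0.
by rewrite sumr_const card_tuple.
Qed.

Definition wp (w : seq bool) : R := word_prob p w.

Lemma wp_cons b w : wp (b :: w) = (if b then p else 1 - p) * wp w.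
Proof. by rewrite /wp /word_prob big_cons. Qed.

Definition Q c m := \sum_(t : m.-tuple bool) wp t * (frae k c t)%:R.

Lemma PYQ m : PY p k m = Q 0 m.
Proof.
rewrite /PY /Q big_mkcond /=; apply: eq_bigr => t _.
rewrite fra_hrc // T_frae //.
by case: frae; rewrite ?mulr1 ?mulr0.
Qed.

Lemma Q0 c : Q c 0 = 0.
Proof. by rewrite /Q (sum_tuple0 (fun t => wp t * (frae k c t)%:R)) mulr0. Qed.

Lemma Zm m : \sum_(t : m.-tuple bool) wp t * (t == [::] :> seq bool)%:R = (m == 0)%:R.
Proof.
case: m => [|m].
  by rewrite (sum_tuple0 (fun t => wp t * (t == [::] :> seq bool)%:R)) /wp /word_prob big_nil mulr1.
rewrite big1 // => t _.
by rewrite (_ : (t == [::] :> seq bool) = false) ?mulr0 // -size_eq0 size_tuple.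
Qed.

Lemma QS c m : Q c m.+1 =
  p * (if (k <= c.+1)%N then (m == 0)%:R else Q c.+1 m) + (1 - p) * Q 0 m.
Proof.
rewrite /Q (sum_tuple_cons (fun t => wp t * (frae k c t)%:R)) big_split /= !mulr_sumr.
congr (_ + _); last by apply: eq_bigr => t _; rewrite wp_cons mulrA.
case: ifP => h.
  rewrite -Zm mulr_sumr; apply: eq_bigr => t _; rewrite wp_cons /=.
  by rewrite mulrA.
rewrite mulr_sumr; apply: eq_bigr => t _; rewrite wp_cons /=.
by rewrite mulrA.
Qed.

Lemma Qd d : forall c m, (c + d = k)%N -> (0 < d)%N ->
  Q c m = (m == d)%:R * p ^+ d + \sum_(1 <= i < d.+1) p ^+ i.-1 * (1 - p) * Q 0 (m - i).
Proof.
elim: d => [//|d IH] c m cd _.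
case: m => [|m].
  rewrite Q0 /= mul0r add0r big1 // => i _.
  by rewrite sub0n Q0 mulr0.
rewrite QS.
case: d IH cd => [|d] IH cd.
  have -> : (k <= c.+1)%N by lia.
  rewrite big_nat1 /= subn1 /= expr0 mul1r expr1 eqSS.
  by rewrite mulrC.
have -> : (k <= c.+1)%N = false by lia.
rewrite (IH c.+1 m) ?addSnnS //.
rewrite (@big_nat_recl _ _ _ d.+2) // /= expr0 mul1r subSS subn0 eqSS.
rewrite mulrDr -addrA; congr (_ + _).
  by rewrite mulrCA -exprS.
rewrite addrC; congr (_ + _).
rewrite mulr_sumr !big_nat; apply: eq_bigr => i /andP [i1 _].
by rewrite subSS !mulrA -exprS prednK.
Qed.

Lemma renewal m : Q 0 m = (m == k)%:R * p ^+ k + \sum_(1 <= i < k.+1) p ^+ i.-1 * (1 - p) * Q 0 (m - i).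
Proof. by apply: Qd. Qed.

End Prob.


Section Analysis.
Variables (R : realType) (p : R) (k : nat).
Hypotheses (hp0 : 0 < p) (hp1 : p < 1) (hk : (0 < k)%N).

Definition aQ m := Q R p k 0 m.

Lemma wp_ge0 w : 0 <= wp R p w.
Proof.
rewrite /wp /word_prob; apply: prodr_ge0 => b _.
case: b => /=; first exact: ltW.
by rewrite subr_ge0 ltW.
Qed.

Lemma a_ge0 m : 0 <= aQ m.
Proof.
rewrite /aQ /Q; apply: sumr_ge0 => t _.
by apply: mulr_ge0; [exact: wp_ge0 | exact: ler0n].
Qed.

Lemma a0 : aQ 0 = 0.
Proof. exact: Q0. Qed.

Definition Smom n := series (fun m : nat => (m%:R : R) ^+ n * aQ m).

Lemma SE n N : Smom n N = \sum_(0 <= m < N) (m%:R : R) ^+ n * aQ m.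
Proof. by []. Qed.

Lemma S_nd n : {homo Smom n : x y / (x <= y)%N >-> x <= y}.
Proof.
move=> x y xy; rewrite !SE (@big_cat_nat _ _ _ x 0 y) //= lerDl.
apply: sumr_ge0 => i _; apply: mulr_ge0; last exact: a_ge0.
by apply: exprn_ge0; exact: ler0n.
Qed.

Lemma stepA n M : (k < M)%N ->
  \sum_(0 <= m < M) (m%:R : R) ^+ n * ((m == k)%:R * p ^+ k) = (k%:R) ^+ n * p ^+ k.
Proof.
move=> kM; rewrite big_mkord (bigD1 (Ordinal kM)) //= eqxx mul1r big1 ?addr0 // => i hi.
have -> : (nat_of_ord i == k) = false.
  apply/negbTE; move: hi; apply: contraNN => /eqP h; apply/eqP/val_inj; exact: h.
by rewrite mul0r mulr0.
Qed.

Lemma stepC (f : nat -> R) i M : (i <= M)%N ->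
  \sum_(0 <= m < M) f m * aQ (m - i) = \sum_(0 <= m < M - i) f (m + i) * aQ m.
Proof.
move=> iM; rewrite (@big_cat_nat _ _ _ i 0 M) //= big1_seq ?add0r.
  by rewrite -{1}(add0n i) big_addn; apply: eq_bigr => m _; rewrite addnK.
move=> m /andP [_]; rewrite mem_index_iota => /andP [_ hm].
have -> : (m - i = 0)%N by apply/eqP; rewrite subn_eq0 ltnW.
by rewrite a0 mulr0.
Qed.

Lemma stepD n i M : \sum_(0 <= m < M) ((m + i)%:R : R) ^+ n * aQ m =
  \sum_(0 <= j < n.+1) 'C(n, j)%:R * (i%:R : R) ^+ (n - j) * Smom j M.
Proof.
rewrite (eq_bigr (fun m => \sum_(0 <= j < n.+1) 'C(n, j)%:R * (i%:R : R) ^+ (n - j) * ((m%:R : R) ^+ j * aQ m))); last first.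
  move=> m _; rewrite natrD addrC exprDn mulr_suml big_mkord; apply: eq_bigr => j _.
  ring.
rewrite exchange_big /=; apply: eq_bigr => j _.
by rewrite SE mulr_sumr.
Qed.

Lemma S_id n N : Smom n (N + k.+1)%N = (k%:R : R) ^+ n * p ^+ k +
  \sum_(0 <= j < n.+1) 'C(n, j)%:R * \sum_(1 <= i < k.+1)
     (p ^+ i.-1 * (1 - p) * (i%:R : R) ^+ (n - j) * Smom j (N + (k.+1 - i))%N).
Proof.
have E : forall m, (m%:R : R) ^+ n * aQ m = (m%:R : R) ^+ n * ((m == k)%:R * p ^+ k) +
   \sum_(1 <= i < k.+1) p ^+ i.-1 * (1 - p) * ((m%:R : R) ^+ n * aQ (m - i)).
  move=> m; rewrite {1}/aQ renewal //.
  rewrite mulrDr mulr_sumr; congr (_ + _).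
  by apply: eq_bigr => i _; rewrite /aQ; ring.
rewrite SE (eq_bigr _ (fun m _ => E m)) big_split /= stepA; last lia.
congr (_ + _).
rewrite exchange_big /=.
transitivity (\sum_(1 <= i < k.+1) \sum_(0 <= j < n.+1) 'C(n, j)%:R *
   (p ^+ i.-1 * (1 - p) * (i%:R : R) ^+ (n - j) * Smom j (N + (k.+1 - i))%N)).
  rewrite !big_nat; apply: eq_bigr => i /andP [i1 ik].
  rewrite -mulr_sumr (stepC (fun m => (m%:R : R) ^+ n)); last lia.
  rewrite stepD mulr_sumr -addnBA //; last exact: ltnW.
  by apply: eq_bigr => j _; ring.
rewrite exchange_big /=; apply: eq_bigr => j _; rewrite mulr_sumr.
by apply: eq_bigr => i _.
Qed.

Lemma geo_sum K : \sum_(1 <= i < K.+1) p ^+ i.-1 * (1 - p) = 1 - p ^+ K.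
Proof.
rewrite big_add1 /=.
elim: K => [|K IH]; first by rewrite big_geq // expr0 subrr.
rewrite big_nat_recr //= IH exprS; ring.
Qed.

Lemma cvg_bsum (r : seq nat) (F : nat -> nat -> R) (L : nat -> R) :
  (forall i, i \in r -> F i @ \oo --> L i) ->
  (fun N => \sum_(i <- r) F i N) @ \oo --> \sum_(i <- r) L i.
Proof.
elim: r => [|i r IH] H.
  rewrite big_nil.
  have -> : (fun N => \sum_(i <- [::]) F i N) = (fun=> 0) by apply/funext => N; rewrite big_nil.
  exact: cvg_cst.
have -> : (fun N => \sum_(j <- i :: r) F j N) = F i + (fun N => \sum_(j <- r) F j N).
  by apply/funext => N; rewrite big_cons.
rewrite big_cons; apply: cvgD.
  by apply: H; rewrite mem_head.
by apply: IH => j jr; apply: H; rewrite in_cons jr orbT.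
Qed.

Definition Tsum n j N := \sum_(1 <= i < k.+1)
     (p ^+ i.-1 * (1 - p) * (i%:R : R) ^+ (n - j) * Smom j (N + (k.+1 - i))%N).

Lemma S_id' n N : Smom n (N + k.+1)%N = (k%:R : R) ^+ n * p ^+ k +
  (\sum_(0 <= j < n) 'C(n, j)%:R * Tsum n j N + Tsum n n N).
Proof.
by rewrite S_id big_nat_recr //= binn mul1r.
Qed.

Lemma c_ge0 i e : 0 <= p ^+ i.-1 * (1 - p) * (i%:R : R) ^+ e.
Proof.
apply: mulr_ge0; last by apply: exprn_ge0; exact: ler0n.
apply: mulr_ge0; first by apply: exprn_ge0; exact: ltW.
by rewrite subr_ge0 ltW.
Qed.

Lemma main n : Smom n @ \oo --> limn (Smom n) /\
  p ^+ k * limn (Smom n) = (k%:R : R) ^+ n * p ^+ k + \sum_(0 <= j < n) 'C(n, j)%:R * limn (Smom j) *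
     \sum_(1 <= i < k.+1) p ^+ i.-1 * (1 - p) * (i%:R : R) ^+ (n - j).
Proof.
elim/ltn_ind: n => n IH.
have cvj : forall j, (j < n)%N -> Smom j @ \oo --> limn (Smom j) by move=> j /IH [].
set B := (k%:R : R) ^+ n * p ^+ k + \sum_(0 <= j < n) 'C(n, j)%:R * limn (Smom j) *
     \sum_(1 <= i < k.+1) p ^+ i.-1 * (1 - p) * (i%:R : R) ^+ (n - j).
have bnd : forall N, p ^+ k * Smom n (N + k.+1)%N <= B.
  move=> N.
  have h1 : Tsum n n N <= (1 - p ^+ k) * Smom n (N + k.+1)%N.
    rewrite -geo_sum mulr_suml; apply: ler_sum => i _.
    rewrite subnn expr0 mulr1; apply: ler_wpM2l.
      by apply: mulr_ge0; [apply: exprn_ge0; exact: ltW | rewrite subr_ge0 ltW].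
    by apply: S_nd; rewrite leq_add2l leq_subr.
  have h2 : \sum_(0 <= j < n) 'C(n, j)%:R * Tsum n j N <= \sum_(0 <= j < n) 'C(n, j)%:R * limn (Smom j) *
     \sum_(1 <= i < k.+1) p ^+ i.-1 * (1 - p) * (i%:R : R) ^+ (n - j).
    rewrite !big_nat; apply: ler_sum => j /andP [_ jn].
    rewrite -mulrA; apply: ler_wpM2l; first exact: ler0n.
    rewrite mulr_sumr; apply: ler_sum => i _.
    rewrite [X in _ <= X]mulrC; apply: ler_wpM2l; first exact: c_ge0.
    exact: (nondecreasing_cvgn_le (S_nd j) (cvj j jn)).
  have := S_id' n N.
  move: h1 h2; rewrite /B.
  move: (Smom n (N + k.+1)%N) (Tsum n n N) (\sum_(0 <= j < n) 'C(n, j)%:R * Tsum n j N) => s t u.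
  move=> h1 h2 e.
  rewrite (_ : p ^+ k * s = s - (1 - p ^+ k) * s); last by ring.
  move: h1; move: ((1 - p ^+ k) * s) => w h1.
  lra.
have pk : 0 < p ^+ k by apply: exprn_gt0.
have cvS : Smom n @ \oo --> limn (Smom n).
  apply: nondecreasing_is_cvgn; first exact: S_nd.
  exists (B / p ^+ k) => _ [N _ <-].
  rewrite ler_pdivlMr // mulrC.
  apply: le_trans (bnd N); apply: ler_wpM2l; first exact: ltW.
  by apply: S_nd; rewrite leq_addr.
split => //.
have H1 : (fun N => Smom n (N + k.+1)%N) @ \oo --> limn (Smom n) by rewrite cvg_shiftn.
have cvj' : forall j, (j < n.+1)%N -> Smom j @ \oo --> limn (Smom j).
  move=> j; rewrite ltnS leq_eqVlt => /orP [/eqP -> //|]; exact: cvj.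
have H2 : (fun N => Smom n (N + k.+1)%N) @ \oo --> (k%:R : R) ^+ n * p ^+ k +
   \sum_(0 <= j < n.+1) 'C(n, j)%:R * \sum_(1 <= i < k.+1)
     (p ^+ i.-1 * (1 - p) * (i%:R : R) ^+ (n - j) * limn (Smom j)).
  rewrite (_ : (fun N => Smom n (N + k.+1)%N) = (fun N => (k%:R : R) ^+ n * p ^+ k +
    \sum_(0 <= j < n.+1) 'C(n, j)%:R * Tsum n j N)); last by apply/funext => N; rewrite S_id.
  apply: cvgD; first exact: cvg_cst.
  apply: cvg_bsum => j; rewrite mem_index_iota => /andP [_ jn].
  apply: cvgMl_tmp; apply: cvg_bsum => i _.
  apply: cvgMl_tmp.
  by rewrite cvg_shiftn; apply: cvj'.
have EL := etrans (esym (cvg_lim (@Rhausdorff R) H1)) (cvg_lim (@Rhausdorff R) H2).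
rewrite big_nat_recr //= binn mul1r subnn in EL.
have e1 : \sum_(1 <= i < k.+1) p ^+ i.-1 * (1 - p) * (i%:R : R) ^+ 0 * limn (Smom n) =
    (1 - p ^+ k) * limn (Smom n).
  rewrite -geo_sum mulr_suml; apply: eq_bigr => i _; by rewrite expr0 mulr1.
have e2 : \sum_(0 <= j < n) 'C(n, j)%:R * \sum_(1 <= i < k.+1)
     (p ^+ i.-1 * (1 - p) * (i%:R : R) ^+ (n - j) * limn (Smom j)) =
   \sum_(0 <= j < n) 'C(n, j)%:R * limn (Smom j) *
     \sum_(1 <= i < k.+1) p ^+ i.-1 * (1 - p) * (i%:R : R) ^+ (n - j).
  apply: eq_bigr => j _; rewrite -mulrA; congr (_ * _).
  by rewrite mulr_sumr; apply: eq_bigr => i _; ring.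
rewrite e1 e2 in EL; rewrite /B.
move: EL; move: (limn (Smom n)) => L EL.
have -> : p ^+ k * L = L - (1 - p ^+ k) * L by ring.
rewrite {1}EL; ring.
Qed.

End Analysis.

Theorem theorem3p1 (R : realType) (p : R) (k : nat)
    (hp0 : 0 < p) (hp1 : p < 1) (hk : (1 <= k)%N) :
  series (fun m : nat => PY p k m) @ \oo --> (1 : R) /\
  forall n : nat, (1 <= n)%N ->
    series (fun m : nat => (m%:R : R) ^+ n * PY p k m) @ \oo -->
      ((k%:R : R) ^+ n + \sum_(0 <= j < n) ('C(n, j)%:R * EY p k j *
         \sum_(1 <= i < k.+1) ((1 - p) * (i%:R : R) ^+ (n - j) / p ^+ (k - i + 1))))
    /\
    (k%:R : R) ^+ n + \sum_(0 <= j < n) ('C(n, j)%:R * EY p k j *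
         \sum_(1 <= i < k.+1) ((1 - p) * (i%:R : R) ^+ (n - j) / p ^+ (k - i + 1)))
    = (k%:R : R) ^+ n + \sum_(0 <= j < n) ('C(n, j)%:R * EY p k j *
         \sum_(0 <= i < n.+1)
           (((eul (n - j) i)%:R * p ^+ i - (eulk k%:Z (n - j) i)%:~R * p ^+ (k + i + 1))
            / ((1 - p) ^+ (n - j) * p ^+ (k + 1)))).
Proof.
have hk' : (0 < k)%N := hk.
have Sfun : forall n, series (fun m : nat => (m%:R : R) ^+ n * PY p k m) = Smom R p k n.
  move=> n; rewrite /Smom; congr series; apply/funext => m.
  by rewrite PYQ.
have EYe : forall j, EY p k j = limn (Smom R p k j) by move=> j; rewrite /EY Sfun.
have pk0 : p ^+ k != 0 by rewrite expf_neq0 // gt_eqF.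
split.
  have [cv e] := main R p k hp0 hp1 hk' 0.
  rewrite big_geq // addr0 expr0 mul1r in e.
  have L1 : limn (Smom R p k 0) = 1.
    by apply: (mulfI pk0); rewrite e mulr1.
  rewrite (_ : (fun m => PY p k m) = (fun m => (m%:R : R) ^+ 0 * PY p k m)); last first.
    by apply/funext => m; rewrite expr0 mul1r.
  by rewrite Sfun -L1.
move=> n n1.
have [cv e] := main R p k hp0 hp1 hk' n.
have EL : limn (Smom R p k n) = (k%:R : R) ^+ n + \sum_(0 <= j < n) ('C(n, j)%:R * EY p k j *
         \sum_(1 <= i < k.+1) ((1 - p) * (i%:R : R) ^+ (n - j) / p ^+ (k - i + 1))).
  apply: (mulfI pk0); rewrite e mulrDr mulr_sumr [_ * p ^+ k]mulrC; congr (_ + _).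
  apply: eq_bigr => j _; rewrite EYe mulrCA; congr (_ * _).
  rewrite mulr_sumr !big_nat; apply: eq_bigr => i /andP [i1 ik].
  have -> : p ^+ k = p ^+ i.-1 * p ^+ (k - i + 1) by rewrite -exprD; congr (_ ^+ _); lia.
  field.
  by rewrite expf_neq0 // gt_eqF.
split.
  by rewrite Sfun -EL.
congr (_ + _); apply: eq_big_nat => j /andP [_ jn]; congr (_ * _).
exact: eul_id.
Qed.
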